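(* Let $X$ be a finite set and let $\mathcal{P}=\{X_1,\ldots,X_m\}$ be an $(m,k)$-partition of $X$ such that, for each $i\in\{1,\ldots,k\}$, $\mathcal{P}$ has exactly $m_i\ge1$ blocks of size $n_i\ge1$. Let $A$ be the set of all $k$-tuples $(t_1,\ldots,t_k)$, where each $t_i=(l_{i,1},\ldots,l_{i,m_i})$ is a sequence of length $m_i$ with entries in $\{n_1,\ldots,n_k\}$, such that the multiset of all entries of $t_1,\ldots,t_k$ together is the multiset containing $n_j$ with multiplicity exactly $m_j$ for each $j\in\{1,\ldots,k\}$. For $(t_1,\ldots,t_k)\in A$ let $s_i=l_{i,1}+\cdots+l_{i,m_i}$ be the sum of the entries of $t_i$. Then \[|\Sigma(X,\mathcal{P})|=m_1!\,m_2!\cdots m_k!\sum_{(t_1,\ldots,t_k)\in A} n_1^{\,s_1}n_2^{\,s_2}\cdots n_k^{\,s_k}.\]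
   Context: An $(m,k)$-partition is a partition with exactly $m$ blocks having exactly $k$ distinct block sizes (here $n_1,\ldots,n_k$ are the distinct block sizes). $T(X,\mathcal{P})$ is the semigroup of all maps $f\colon X\to X$ such that every block of $\mathcal{P}$ is mapped by $f$ into some block of $\mathcal{P}$, and $\Sigma(X,\mathcal{P})=\{f\in T(X,\mathcal{P})\mid Xf\cap B\neq\emptyset\text{ for every block } B \text{ of } \mathcal{P}\}$. *)

(* Defs.v *)
From mathcomp Require Import all_boot.
Set Implicit Arguments. Unset Strict Implicit. Unset Printing Implicit Defensive.

Definition in_TXP (T : finType) (P : {set {set T}}) (f : {ffun T -> T}) : bool :=
  [forall B in P, [exists C in P, (f @: B) \subset C]].

Definition in_SigmaXP (T : finType) (P : {set {set T}}) (f : {ffun T -> T}) : bool :=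
  in_TXP P f && [forall B in P, (f @: [set: T]) :&: B != set0].

Definition SigmaXP (T : finType) (P : {set {set T}}) : {set {ffun T -> T}} :=
  [set f | in_SigmaXP P f].

(* The index set A: k-tuples (t_1,...,t_k), t_i of length m_i, with entries
   natural numbers (represented in 'I_N, N = 1 + max n_j, which contains all
   n_j), all entries in {n_1,...,n_k}, and total multiplicity of n_j equal m_j. *)
Definition bound (k : nat) (n : 'I_k -> nat) : nat := (\max_(i < k) n i).+1.

Definition Atype (k : nat) (n : 'I_k -> nat) (mult : 'I_k -> nat) :=
  {dffun forall i : 'I_k, (mult i).-tuple 'I_(bound n)}.

Definition in_A (k : nat) (n : 'I_k -> nat) (mult : 'I_k -> nat)
  (t : Atype n mult) : bool :=
  [forall i, all (fun x : 'I_(bound n) => [exists j, nat_of_ord x == n j]) (t i)]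
  && [forall j, \sum_(i < k) count (fun x : 'I_(bound n) => nat_of_ord x == n j) (t i)
                == mult j].

Definition s_of (k : nat) (n : 'I_k -> nat) (mult : 'I_k -> nat)
  (t : Atype n mult) (i : 'I_k) : nat := \sum_(x <- t i) nat_of_ord x.

(* Main.v *)
Require Import Defs.
From mathcomp Require Import all_boot all_fingroup.
Set Implicit Arguments. Unset Strict Implicit. Unset Printing Implicit Defensive.

Definition ev (T : finType) (A : {set T}) (m : nat) (h : #|A| = m) (j : 'I_m) : T :=
  enum_val (cast_ord (esym h) j).

Lemma ev_in (T : finType) (A : {set T}) m (h : #|A| = m) j : ev h j \in A.
Proof. exact: enum_valP. Qed.

Lemma ev_inj (T : finType) (A : {set T}) m (h : #|A| = m) : injective (ev h).
Proof. by move=> i j /enum_val_inj /cast_ord_inj. Qed.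

Lemma ev_onto (T : finType) (A : {set T}) m (h : #|A| = m) x :
  x \in A -> exists j, ev h j = x.
Proof.
move=> Ax; exists (cast_ord h (enum_rank_in Ax x)).
by rewrite /ev cast_ordK enum_rankK_in.
Qed.

Lemma big_sig (R : Type) (idx : R) (op : Monoid.com_law idx) (k : nat)
  (m : 'I_k -> nat) (F : {i : 'I_k & 'I_(m i)} -> R) :
  \big[op/idx]_(b : {i : 'I_k & 'I_(m i)}) F b =
  \big[op/idx]_(i < k) \big[op/idx]_(j < m i) F (Tagged (fun i => 'I_(m i)) j).
Proof.
rewrite (@sig_big_dep _ _ _ _ (fun i => 'I_(m i)) xpredT (fun i => xpredT)
   (fun i (j : 'I_(m i)) => F (Tagged (fun i => 'I_(m i)) j))) /=.
by apply: eq_bigr => -[i j].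
Qed.

Lemma foldr_prod (aT : finType) (f : aT -> nat) :
  foldr muln 1 [seq f x | x : aT] = \prod_(x : aT) f x.
Proof.
rewrite /image_mem -big_enum /=; elim: (enum aT) => [|x s IH]; first by rewrite big_nil.
by rewrite big_cons /= IH.
Qed.

Lemma cardE' (T : finType) (A : {set T}) : #|A| = \sum_(x : T) (x \in A).
Proof. by rewrite -sum1_card big_mkcond; apply: eq_bigr => x _; case: (x \in A). Qed.

Lemma E_ne (T I : finType) (P : {set {set T}}) (E : I -> {set T})
  (hP : partition P [set: T]) (hEin : forall b, E b \in P) b :
  exists x, x \in E b.
Proof.
case/and3P: hP => _ _ P0; apply/set0Pn; apply: contraNneq P0 => <-; exact: hEin.
Qed.

Lemma E_disj (T I : finType) (P : {set {set T}}) (E : I -> {set T})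
  (hP : partition P [set: T]) (hEin : forall b, E b \in P) (hEinj : injective E) x a b :
  x \in E a -> x \in E b -> a = b.
Proof.
move=> xa xb; case/and3P: hP => _ /trivIsetP tP _.
case: (eqVneq (E a) (E b)) => [/hEinj //|neq].
by rewrite (disjointFr (tP _ _ (hEin a) (hEin b) neq) xa) in xb.
Qed.

Lemma E_cov (T I : finType) (P : {set {set T}}) (E : I -> {set T})
  (hP : partition P [set: T]) (hEonto : forall B, B \in P -> exists b, E b = B) x :
  exists a, x \in E a.
Proof.
case/and3P: hP => /eqP cP _ _.
have : x \in cover P by rewrite cP inE.
by case/bigcupP => B PB xB; have [a Ea] := hEonto B PB; exists a; rewrite Ea.
Qed.

Definition Fp (T I : finType) (E : I -> {set T}) (phi : {perm I}) : {set {ffun T -> T}} :=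
  [set f : {ffun T -> T} | [forall a, f @: E a \subset E (phi a)]].

Lemma Fp_sig (T I : finType) (P : {set {set T}}) (E : I -> {set T})
  (hP : partition P [set: T]) (hEin : forall b, E b \in P) (hEinj : injective E)
  (hEonto : forall B, B \in P -> exists b, E b = B) phi f :
  f \in Fp E phi -> in_SigmaXP P f.
Proof.
rewrite inE => /forallP H; apply/andP; split.
  apply/forallP => B; apply/implyP => PB; have [b <-] := hEonto B PB.
  by apply/existsP; exists (E (phi b)); rewrite hEin H.
apply/forallP => C; apply/implyP => PC; have [b <-] := hEonto C PC.
have [x xa] := E_ne hP hEin ((phi^-1)%g b).
apply/set0Pn; exists (f x); rewrite inE imset_f ?inE //=.
by have := subsetP (H ((phi^-1)%g b)) (f x) (imset_f f xa); rewrite permKV.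
Qed.

Lemma Fp_uniq (T I : finType) (P : {set {set T}}) (E : I -> {set T})
  (hP : partition P [set: T]) (hEin : forall b, E b \in P) (hEinj : injective E)
  phi psi f :
  f \in Fp E phi -> f \in Fp E psi -> phi = psi.
Proof.
rewrite !inE => /forallP H1 /forallP H2; apply/permP => a.
have [x xa] := E_ne hP hEin a.
exact: (E_disj hP hEin hEinj (subsetP (H1 a) _ (imset_f f xa)) (subsetP (H2 a) _ (imset_f f xa))).
Qed.

Lemma Sig_ex (T I : finType) (P : {set {set T}}) (E : I -> {set T})
  (hP : partition P [set: T]) (hEin : forall b, E b \in P) (hEinj : injective E)
  (hEonto : forall B, B \in P -> exists b, E b = B) f :
  in_SigmaXP P f -> exists phi, f \in Fp E phi.
Proof.
case/andP => /forallP HT /forallP HS.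
pose beta a := odflt a [pick b | f @: E a \subset E b].
have bS a : f @: E a \subset E (beta a).
  rewrite /beta; case: pickP => [b //|none] /=.
  have /existsP [C /andP [PC sC]] := implyP (HT (E a)) (hEin a).
  have [b Eb] := hEonto C PC; by have := none b; rewrite Eb sC.
have bsurj b : exists a, beta a = b.
  have /set0Pn [y] := implyP (HS (E b)) (hEin b).
  rewrite inE => /andP [/imsetP [x _ ->] fxb].
  have [a xa] := E_cov hP hEonto x; exists a.
  exact: (E_disj hP hEin hEinj (subsetP (bS a) _ (imset_f f xa)) fxb).
have binj : injective beta.
  have Hi : {in I &, injective beta}.
    apply/image_injP; apply/eqP; apply: eq_card => b.
    by have [a <-] := bsurj b; rewrite codom_f.
  by move=> x y; apply: Hi.
exists (perm binj); rewrite inE; apply/forallP => a; by rewrite permE.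
Qed.

Lemma card_Sig (T I : finType) (P : {set {set T}}) (E : I -> {set T})
  (hP : partition P [set: T]) (hEin : forall b, E b \in P) (hEinj : injective E)
  (hEonto : forall B, B \in P -> exists b, E b = B) :
  #|SigmaXP P| = \sum_(phi : {perm I}) #|Fp E phi|.
Proof.
rewrite cardE'; under [RHS]eq_bigr do rewrite cardE'.
rewrite exchange_big /=; apply: eq_bigr => f _.
rewrite inE; case: (boolP (in_SigmaXP P f)) => Hf.
  have [phi0 H0] := Sig_ex hP hEin hEinj hEonto Hf.
  rewrite (bigD1 phi0) //= H0 big1 // => psi /negbTE npsi.
  case: (boolP (f \in Fp E psi)) => // Hpsi.
  by rewrite (Fp_uniq hP hEin hEinj Hpsi H0) eqxx in npsi.
rewrite big1 // => phi _; case: (boolP (f \in Fp E phi)) => // Hphi.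
by rewrite (Fp_sig hP hEin hEinj hEonto Hphi) in Hf.
Qed.

Lemma card_Fp (T I : finType) (P : {set {set T}}) (E : I -> {set T})
  (hP : partition P [set: T]) (hEin : forall b, E b \in P) (hEinj : injective E)
  (hEonto : forall B, B \in P -> exists b, E b = B) phi :
  #|Fp E phi| = \prod_(a : I) #|E (phi a)| ^ #|E a|.
Proof.
pose S x := [set y | [exists a, (x \in E a) && (y \in E (phi a))]].
have SE x a : x \in E a -> S x = E (phi a).
  move=> xa; apply/setP => y; rewrite inE; apply/existsP/idP => [[a' /andP [xa' ya']]|ya].
    by rewrite (E_disj hP hEin hEinj xa xa').
  by exists a; rewrite xa.
have -> : Fp E phi = [set f in family (fun x => mem (S x))].
  apply/setP => f; rewrite !inE; apply/forallP/familyP => [H x|H a].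
    have [a xa] := E_cov hP hEonto x; rewrite /= (SE x a xa).
    exact: (subsetP (H a) _ (imset_f f xa)).
  apply/subsetP => y /imsetP [x xa ->]; have := H x; by rewrite /= (SE x a xa).
rewrite cardsE card_family foldr_prod.
have cP : cover P = [set: T] by case/and3P: hP => /eqP.
rewrite (eq_bigl (fun x => x \in cover P)); last by move=> x; rewrite cP inE.
rewrite big_trivIset; last by case/and3P: hP.
have PE : P = E @: [set: I].
  apply/setP => B; apply/idP/imsetP => [PB|[a _ ->]]; last exact: hEin.
  by have [a <-] := hEonto B PB; exists a.
rewrite PE big_imset /=; last by move=> a b _ _; apply: hEinj.
rewrite (eq_bigl xpredT); last by move=> a; rewrite inE.
apply: eq_bigr => a _.
rewrite (eq_bigr (fun _ => #|E (phi a)|)); last by move=> x xa; rewrite (SE x a xa).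
by rewrite prod_nat_const.
Qed.

Notation Ix k m := ({i : 'I_k & 'I_(m i)}).

Lemma card_tag k (mult : 'I_k -> nat) r :
  #|[set a : Ix k mult | tag a == r]| = mult r.
Proof.
rewrite cardE' big_sig (bigD1 r) //= [X in _ + X]big1 ?addn0; last first.
  move=> i ir; rewrite big1 // => j _; rewrite inE /=.
  by case: eqP ir => // ->; rewrite eqxx.
by rewrite (eq_bigr (fun _ => 1)) ?sum1_card ?card_ord // => j _; rewrite inE eqxx.
Qed.
Lemma Tagged_inj (I : eqType) (T_ : I -> eqType) (i : I) :
  injective (Tagged T_ (i := i)).
Proof.
move=> x y H; have := congr1 (tagged_as (Tagged T_ x)) H.
by rewrite !tagged_asE.
Qed.

Definition uof k (mult : 'I_k -> nat) (phi : {perm Ix k mult}) : {ffun Ix k mult -> 'I_k} :=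
  [ffun b => tag ((phi^-1)%g b)].

Definition good k (mult : 'I_k -> nat) (u : {ffun Ix k mult -> 'I_k}) : bool :=
  [forall r, #|[set b | u b == r]| == mult r].

Lemma good_uof k (mult : 'I_k -> nat) phi : good (@uof k mult phi).
Proof.
apply/forallP => r; apply/eqP; rewrite -(card_tag mult r).
rewrite -(card_imset [set a : Ix k mult | tag a == r] (@perm_inj _ phi)); apply: eq_card => b; rewrite [in LHS]inE ffunE.
apply/idP/imsetP => [/eqP <-|[a]]; first by exists ((phi^-1)%g b); rewrite ?inE ?permKV.
by rewrite inE => /eqP <- ->; rewrite permK.
Qed.


Definition theta k (mult : 'I_k -> nat) (u : {ffun Ix k mult -> 'I_k})
  (hu : forall r, #|[set b | u b == r]| = mult r)
  (psi : {dffun forall i : 'I_k, {perm 'I_(mult i)}}) (a : Ix k mult) : Ix k mult :=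
  ev (hu (tag a)) (psi (tag a) (tagged a)).

Lemma ev_u k (mult : 'I_k -> nat) (u : {ffun Ix k mult -> 'I_k})
  (hu : forall r, #|[set b | u b == r]| = mult r) r j : u (ev (hu r) j) = r.
Proof. by have := ev_in (hu r) j; rewrite inE => /eqP. Qed.

Lemma theta_inj k (mult : 'I_k -> nat) (u : {ffun Ix k mult -> 'I_k})
  (hu : forall r, #|[set b | u b == r]| = mult r) psi : injective (theta hu psi).
Proof.
move=> [i j] [i' j'] H.
have ei : i = i' by have := congr1 u H; rewrite /theta !ev_u.
subst i'; move: H; rewrite /theta /= => /ev_inj /perm_inj ->; done.
Qed.

Lemma card_fiber k (mult : 'I_k -> nat) (u : {ffun Ix k mult -> 'I_k})
  (hu : forall r, #|[set b | u b == r]| = mult r) :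
  #|[set phi : {perm Ix k mult} | uof phi == u]| = \prod_(i < k) (mult i)`!.
Proof.
pose Th (psi : {dffun forall i : 'I_k, {perm 'I_(mult i)}}) := perm (@theta_inj k mult u hu psi).
have Thinj : injective Th.
  move=> psi psi' H; apply/ffunP => i; apply/permP => j.
  have := congr1 (fun f : {perm _} => f (Tagged (fun i => 'I_(mult i)) j)) H.
  by rewrite /Th !permE /theta /= => /ev_inj.
have -> : [set phi : {perm Ix k mult} | uof phi == u] = Th @: [set: {dffun forall i : 'I_k, {perm 'I_(mult i)}}].
  apply/setP => phi; rewrite inE; apply/eqP/imsetP => [Hphi|[psi _ ->]]; last first.
    apply/ffunP => b; rewrite ffunE.
    rewrite -{2}(permKV (Th psi) b); set x := ((Th psi)^-1)%g b; by rewrite /Th permE /theta ev_u.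
  have Hu a : u (phi a) = tag a by rewrite -Hphi ffunE permK.
  pose ga i (j : 'I_(mult i)) := odflt j [pick j' | ev (hu i) j' == phi (Tagged (fun i => 'I_(mult i)) j)].
  have gaE i j : ev (hu i) (ga i j) = phi (Tagged (fun i => 'I_(mult i)) j).
    rewrite /ga; case: pickP => [j' /eqP //|none] /=.
    have : phi (Tagged (fun i => 'I_(mult i)) j) \in [set b | u b == i] by rewrite inE Hu.
    by case/(ev_onto (hu i)) => j' ej'; have := none j'; rewrite ej' eqxx.
  have gainj i : injective (ga i).
    by move=> j j' /(congr1 (ev (hu i))); rewrite !gaE => /perm_inj /Tagged_inj.
  exists (finfun (fun i => perm (gainj i)) : {dffun forall i : 'I_k, {perm 'I_(mult i)}}) => //.
  apply/permP => -[i j]; rewrite /Th permE /theta /= ffunE permE gaE; done.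
rewrite card_imset // cardsE card_dep_ffun foldr_prod.
by apply: eq_bigr => i _; rewrite card_Sn.
Qed.

Lemma sum_perm k (mult : 'I_k -> nat) (G : 'I_k -> 'I_k -> nat) :
  \sum_(phi : {perm Ix k mult}) \prod_(a : Ix k mult) G (tag (phi a)) (tag a) =
  (\prod_(i < k) (mult i)`!) *
  \sum_(u : {ffun Ix k mult -> 'I_k} | good u) \prod_(b : Ix k mult) G (tag b) (u b).
Proof.
have step1 (phi : {perm Ix k mult}) : \prod_(a : Ix k mult) G (tag (phi a)) (tag a) =
                 \prod_(b : Ix k mult) G (tag b) (uof phi b).
  rewrite (reindex_inj (@perm_inj _ (phi^-1)%g)); apply: eq_bigr => b _.
  by rewrite permKV ffunE.
rewrite (eq_bigr _ (fun phi _ => step1 phi)).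
rewrite (partition_big (@uof k mult) (@good k mult)) /=; last by move=> phi _; exact: good_uof.
rewrite big_distrr; apply: eq_bigr => u gu.
have hu r : #|[set b | u b == r]| = mult r by exact: (eqP (forallP gu r)).
rewrite (eq_bigr (fun _ => \prod_(b : Ix k mult) G (tag b) (u b))); last by move=> phi /eqP ->.
rewrite (eq_bigl [in [set phi : {perm Ix k mult} | uof phi == u]]); last by move=> phi; rewrite inE.
by rewrite sum_nat_const card_fiber.
Qed.

Lemma n_lt k (n : 'I_k -> nat) r : n r < bound n.
Proof. by rewrite /bound ltnS; apply: (leq_bigmax r). Qed.

Definition Phi k (n mult : 'I_k -> nat) (u : {ffun Ix k mult -> 'I_k}) : Atype n mult :=
  finfun (fun i => [tuple (inord (n (u (Tagged (fun i => 'I_(mult i)) j))) : 'I_(bound n)) | j < mult i]).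

Definition Psi k (n mult : 'I_k -> nat) (t : Atype n mult) : {ffun Ix k mult -> 'I_k} :=
  [ffun b => odflt (tag b) [pick r | n r == tnth (t (tag b)) (tagged b)]].

Arguments Phi {k} n {mult} u.
Arguments Psi {k n mult} t.

Lemma tnth_Phi k (n mult : 'I_k -> nat) (u : {ffun Ix k mult -> 'I_k}) i j :
  nat_of_ord (tnth (Phi n u i) j) = n (u (Tagged (fun i => 'I_(mult i)) j)).
Proof. by rewrite /Phi ffunE tnth_mktuple inordK // n_lt. Qed.

Lemma Psi_Phi k (n mult : 'I_k -> nat) (hn_inj : injective n) (u : {ffun Ix k mult -> 'I_k}) :
  Psi (Phi n u) = u.
Proof.
apply/ffunP => -[i j]; rewrite ffunE /=; case: pickP => [r /eqP e | none] /=.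
  by move: e; rewrite tnth_Phi => /hn_inj.
by have := none (u (Tagged (fun i => 'I_(mult i)) j)); rewrite tnth_Phi eqxx.
Qed.

Lemma Phi_Psi k (n mult : 'I_k -> nat) (t : Atype n mult) :
  in_A t -> Phi n (Psi t) = t.
Proof.
case/andP => /forallP H1 _; apply/ffunP => i; apply: eq_from_tnth => j.
apply: val_inj; rewrite /= tnth_Phi ffunE /=; case: pickP => [r /eqP //| none] /=.
have /existsP [r /eqP e] := allP (H1 i) _ (mem_tnth j (t i)).
by have := none r; rewrite e eqxx.
Qed.

Lemma count_Phi k (n mult : 'I_k -> nat) (hn_inj : injective n) (u : {ffun Ix k mult -> 'I_k}) r :
  \sum_(i < k) count (fun x : 'I_(bound n) => nat_of_ord x == n r) (Phi n u i) =
  #|[set b | u b == r]|.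
Proof.
rewrite cardE' big_sig; apply: eq_bigr => i _.
rewrite -sum1_count big_tuple big_mkcond /=; apply: eq_bigr => j _.
by rewrite tnth_Phi inE (inj_eq hn_inj); case: (_ == _).
Qed.

Lemma in_A_Phi k (n mult : 'I_k -> nat) (hn_inj : injective n) (u : {ffun Ix k mult -> 'I_k}) :
  in_A (Phi n u) = good u.
Proof.
rewrite /in_A /good; have -> : [forall i, all (fun x : 'I_(bound n) => [exists j, nat_of_ord x == n j]) (Phi n u i)].
  apply/forallP => i; apply/allP => x /tnthP [j ->]; apply/existsP.
  by exists (u (Tagged (fun i => 'I_(mult i)) j)); rewrite tnth_Phi.
by rewrite /=; apply: eq_forallb => r; rewrite count_Phi.
Qed.

Lemma sum_A k (n mult : 'I_k -> nat) (hn_inj : injective n) :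
  \sum_(u : {ffun Ix k mult -> 'I_k} | good u) \prod_(b : Ix k mult) n (tag b) ^ n (u b) =
  \sum_(t : Atype n mult | in_A t) \prod_(i < k) n i ^ s_of t i.
Proof.
have -> : \sum_(t : Atype n mult | in_A t) \prod_(i < k) n i ^ s_of t i =
          \sum_(t in (Phi n) @: [set u : {ffun Ix k mult -> 'I_k} | good u]) \prod_(i < k) n i ^ s_of t i.
  apply: eq_bigl => t; apply/idP/imsetP => [tA|[u]].
    exists (Psi t); last by rewrite Phi_Psi.
    by rewrite inE -(in_A_Phi hn_inj) Phi_Psi.
  by rewrite inE -(in_A_Phi hn_inj) => uA ->.
rewrite big_imset /=; last first.
  by move=> u v _ _ /(congr1 (Psi)); rewrite !Psi_Phi.
apply: eq_big => [u|u _]; first by rewrite inE.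
rewrite big_sig; apply: eq_bigr => i _; rewrite /s_of big_tuple expn_sum.
by apply: eq_bigr => j _; rewrite tnth_Phi.
Qed.

Theorem theorem6p3 (T : finType) (P : {set {set T}}) (k : nat)
  (n mult : 'I_k -> nat)
  (hP : partition P [set: T])
  (hn_inj : injective n)
  (hn_pos : forall i, 1 <= n i)
  (hm_pos : forall i, 1 <= mult i)
  (hsizes : forall B, B \in P -> exists i, #|B| = n i)
  (hmult : forall i, #|[set B in P | #|B| == n i]| = mult i) :
  #|SigmaXP P| =
    (\prod_(i < k) (mult i)`!) *
    \sum_(t : Atype n mult | in_A t) \prod_(i < k) n i ^ s_of t i.
Proof.
pose E (b : Ix k mult) : {set T} := ev (hmult (tag b)) (tagged b).
have hE b : (E b \in P) && (#|E b| == n (tag b)).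
  by have := ev_in (hmult (tag b)) (tagged b); rewrite inE.
have hEin b : E b \in P by case/andP: (hE b).
have hEcard b : #|E b| = n (tag b) by case/andP: (hE b) => _ /eqP.
have hEinj : injective E.
  move=> [i j] [i' j'] H.
  have ei : i = i' by apply: hn_inj; rewrite -(hEcard (Tagged _ j)) -(hEcard (Tagged _ j')) H.
  by subst i'; move: H; rewrite /E /= => /ev_inj ->.
have hEonto B : B \in P -> exists b, E b = B.
  move=> PB; have [i Bi] := hsizes B PB.
  have : B \in [set B in P | #|B| == n i] by rewrite inE PB Bi eqxx.
  by case/(ev_onto (hmult i)) => j ej; exists (Tagged (fun i => 'I_(mult i)) j).
rewrite (card_Sig hP hEin hEinj hEonto).
rewrite (eq_bigr (fun phi : {perm Ix k mult} => \prod_(a : Ix k mult) n (tag (phi a)) ^ n (tag a))); last first.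
  by move=> phi _; rewrite (card_Fp hP hEin hEinj hEonto); apply: eq_bigr => a _; rewrite !hEcard.
by rewrite (sum_perm mult (fun r s => n r ^ n s)) (sum_A mult hn_inj).
Qed.
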